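(* Let $N_f\ge1$ be an integer, $\beta>0$, $\lambda>0$, and let $p_r(i)=i^{-\beta}/\sum_{k=1}^{N_f}k^{-\beta}$. For $r_c>0$ let $p_c^*(i)=p_c^*(i;r_c)$, $i=1,\dots,N_f$, be an optimal solution of $\max \sum_{i=1}^{N_f}p_r(i)(1-e^{-\lambda p_c(i)\pi r_c^2})$ subject to $\sum_i p_c(i)=1$, $p_c(i)\ge0$, and define the maximal offloading ratio \[ p_o(p_c^*,r_c)=\sum_{i=1}^{N_f}p_r(i)\left(1-e^{-\lambda p_c^*(i)\pi r_c^2}\right). \] Let $F,W,\sigma_0^2,\eta,P_c,P_{\max},\alpha>0$, and for $r>0$ let $E_c^*(r)$ be the minimum value of \[ \frac{F}{W\log_2\!\left(1+\frac{P_t r^{-\alpha}}{\sigma_0^2}\right)}\left(\frac{1}{\eta}P_t+P_c\right)\quad\text{over } 0<P_t\le P_{\max}. \] With $f(p,r)=2\pi r\lambda p\,e^{-\lambda p\pi r^2}$, define the minimal average energy cost \[ \bar E_c^*(r_c)=\sum_{i=1}^{N_f}p_r(i)\int_0^{r_c}E_c^*(r)\,f(p_c^*(i;r_c),r)\,dr. \] Then both $p_o(p_c^*,r_c)$ and $\bar E_c^*(r_c)$ are increasing functions of the collaboration distance $r_c$.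
   Context: Interpretation: users form a Poisson point process of density $\lambda$, file requests follow a Zipf distribution over $N_f$ files, users cache files with the optimized probabilities $p_c^*(i)$, a user is served via a D2D link only by a caching user within distance $r_c$ (the collaboration distance), $f(p_c^*(i),r)$ is the density of the distance to the nearest user caching file $i$, and $E_c^*(r)$ is the minimal energy for a transmitter to send a file over a link of length $r$. *)

(* Defs.v *)
From Stdlib Require Import Reals.
From Coquelicot Require Import Coquelicot.
Open Scope R_scope.

Definition p_r (beta : R) (Nf : nat) (i : nat) : R :=
  Rpower (INR i) (- beta) / sum_n_m (fun k => Rpower (INR k) (- beta)) 1 Nf.

Definition p_o (beta lam : R) (Nf : nat) (pc : nat -> R) (rc : R) : R :=
  sum_n_m (fun i => p_r beta Nf i * (1 - exp (- lam * pc i * PI * rc ^ 2))) 1 Nf.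

Definition feasible_pc (Nf : nat) (pc : nat -> R) : Prop :=
  sum_n_m pc 1 Nf = 1 /\ (forall i, (1 <= i <= Nf)%nat -> 0 <= pc i).

Definition optimal_pc (beta lam : R) (Nf : nat) (rc : R) (pc : nat -> R) : Prop :=
  feasible_pc Nf pc /\
  (forall q, feasible_pc Nf q -> p_o beta lam Nf q rc <= p_o beta lam Nf pc rc).

Definition log2 (x : R) : R := ln x / ln 2.

Definition energy_cost (F W sigma2 eta Pc alpha r Pt : R) : R :=
  F / (W * log2 (1 + Pt * Rpower r (- alpha) / sigma2)) * (/ eta * Pt + Pc).

(* E_c^*(r): minimal value of the energy cost over 0 < Pt <= Pmax
   (taken as the infimum, which is attained) *)
Definition Ec_star (F W sigma2 eta Pc Pmax alpha r : R) : R :=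
  real (Glb_Rbar (fun y => exists Pt, 0 < Pt <= Pmax /\
                             y = energy_cost F W sigma2 eta Pc alpha r Pt)).

(* density of the distance to the nearest user caching the file *)
Definition f_dist (lam p r : R) : R :=
  2 * PI * r * lam * p * exp (- lam * p * PI * r ^ 2).

Definition Ebar (beta lam : R) (Nf : nat) (F W sigma2 eta Pc Pmax alpha : R)
    (pc : nat -> R) (rc : R) : R :=
  sum_n_m (fun i => p_r beta Nf i *
    RInt (fun r => Ec_star F W sigma2 eta Pc Pmax alpha r * f_dist lam (pc i) r) 0 rc)
    1 Nf.

(* Main.v *)
Require Import Defs.
From Stdlib Require Import Reals Lra Lia ZArith FunctionalExtensionality Classical.
From Coquelicot Require Import Coquelicot.
Open Scope R_scope.

Ltac Req := match goal with |- @eq _ ?a ?b => change (@eq R a b) end.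

Lemma sumR_le_loc (a b : nat -> R) n m :
  (forall k, (n <= k <= m)%nat -> a k <= b k) -> sum_n_m a n m <= sum_n_m b n m.
Proof.
  intros H.
  rewrite (sum_n_m_ext_loc a (fun k => if andb (Nat.leb n k) (Nat.leb k m) then a k else b k)).
  - apply sum_n_m_le. intros k. destruct (Nat.leb n k) eqn:E1; destruct (Nat.leb k m) eqn:E2; simpl;
      try lra. apply H. apply Nat.leb_le in E1. apply Nat.leb_le in E2. lia.
  - intros k Hk. replace (Nat.leb n k) with true by (symmetry; apply Nat.leb_le; lia).
    replace (Nat.leb k m) with true by (symmetry; apply Nat.leb_le; lia). reflexivity.
Qed.

Lemma sumR_plus (a b : nat -> R) n m :
  @eq R (sum_n_m (fun k => a k + b k) n m) (sum_n_m a n m + sum_n_m b n m).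
Proof. apply (sum_n_m_plus a b). Qed.

Lemma sumR_scal (c : R) (a : nat -> R) n m :
  @eq R (sum_n_m (fun k => c * a k) n m) (c * sum_n_m a n m).
Proof. apply (sum_n_m_mult_l c a). Qed.

Lemma sumR_minus (a b : nat -> R) n m :
  @eq R (sum_n_m (fun k => a k - b k) n m) (sum_n_m a n m - sum_n_m b n m).
Proof.
  replace (fun k => a k - b k) with (fun k => a k + (-1) * b k)
    by (apply functional_extensionality; intros; ring).
  rewrite sumR_plus, sumR_scal. ring.
Qed.

Lemma sumR_zero_loc (a : nat -> R) n m :
  (forall k, (n <= k <= m)%nat -> a k = 0) -> @eq R (sum_n_m a n m) 0.
Proof.
  intros H. rewrite (sum_n_m_ext_loc a (fun _ => 0)); auto.
  rewrite sum_n_m_const. ring.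
Qed.

Definition dl (x : R) (i k : nat) : R := if Nat.eqb k i then x else 0.

Lemma sumR_delta (x : R) i n m : (1 <= n)%nat -> (n <= i <= m)%nat ->
  @eq R (sum_n_m (dl x i) n m) x.
Proof.
  intros H0 H. unfold dl.
  rewrite (sum_n_m_Chasles _ n i m) by lia.
  rewrite (sum_n_m_Chasles _ n (pred i) i) by lia.
  assert (E1: sum_n_m (fun k => if Nat.eqb k i then x else 0) n (pred i) = 0).
  { apply sumR_zero_loc. intros k Hk. destruct (Nat.eqb_spec k i); [lia|auto]. }
  assert (E2: sum_n_m (fun k => if Nat.eqb k i then x else 0) (S i) m = 0).
  { apply sumR_zero_loc. intros k Hk. destruct (Nat.eqb_spec k i); [lia|auto]. }
  replace (S (pred i)) with i by lia.
  rewrite sum_n_n, Nat.eqb_refl.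
  change (plus (plus (sum_n_m (fun k : nat => if Nat.eqb k i then x else 0) n (Init.Nat.pred i)) x)
    (sum_n_m (fun k : nat => if Nat.eqb k i then x else 0) (S i) m) = x).
  rewrite E1, E2. cbn. unfold plus; simpl. ring.
Qed.

Lemma sumR_pos_ex (p : nat -> R) n m :
  sum_n_m p n m > 0 -> exists k, (n <= k <= m)%nat /\ p k > 0.
Proof.
  intros H. destruct (Classical_Prop.classic (exists k, (n <= k <= m)%nat /\ p k > 0)) as [h|h]; auto.
  exfalso. assert (sum_n_m p n m <= sum_n_m (fun _ => 0) n m).
  { apply sumR_le_loc. intros k Hk. destruct (Rle_or_lt (p k) 0); auto. exfalso; apply h; eauto. }
  rewrite sum_n_m_const in H0. lra.
Qed.

Lemma abel (Q E H : R -> R) (M r1 : R) : 0 < r1 -> 0 <= M ->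
 (forall x y, 0 < x <= y -> y <= r1 -> E x <= E y) ->
 (forall x, 0 < x -> 0 <= E x) ->
 (forall x, 0 <= x <= r1 -> 0 <= H x) ->
 E r1 * H r1 <= Q r1 ->
 (forall x y, 0 < x <= y -> y <= r1 -> E x * (H x - H y) - (E y - E x) * M * (y - x) <= Q x - Q y) ->
 (forall y, 0 < y <= r1 -> - (E y * M * y) <= Q 0 - Q y) ->
 0 <= Q 0.
Proof.
  intros Hr1 HM Emon Epos Hpos Hbase Hstep H0.
  assert (Hn: forall n : nat, (1 <= n)%nat -> - (E r1 * M * (r1 / INR n)) <= Q 0).
  { intros n Hn1.
    assert (HnR: 1 <= INR n) by (apply (le_INR 1); lia).
    set (D := r1 / INR n).
    assert (HD: 0 < D) by (unfold D; apply Rdiv_lt_0_compat; lra).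
    assert (HnD: INR n * D = r1) by (unfold D; field; lra).
    assert (Cl: forall j : nat, (j < n)%nat ->
      E (r1 - INR j * D) * H (r1 - INR j * D) - (E r1 - E (r1 - INR j * D)) * M * D
        <= Q (r1 - INR j * D)).
    { induction j as [|j IH]; intros Hj.
      - simpl. replace (r1 - 0 * D) with r1 by ring. nra.
      - assert (Hj1 : (j < n)%nat) by lia. specialize (IH Hj1).
        rewrite S_INR.
        set (y := r1 - INR j * D) in *. set (x := r1 - (INR j + 1) * D).
        assert (Hx: 0 < x).
        { unfold x. assert (INR (S j) <= INR n - 1).
          { assert (INR (S (S j)) <= INR n) by (apply le_INR; lia).
            rewrite S_INR in H1. lra. }
          rewrite S_INR in H1. nra. }
        assert (Hxy: x = y - D) by (unfold x, y; ring).
        assert (Hy: y <= r1). { unfold y. assert (0 <= INR j) by apply pos_INR. nra. }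
        specialize (Hstep x y ltac:(lra) Hy).
        assert (Exy := Emon x y ltac:(lra) Hy).
        assert (Eyr := Emon y r1 ltac:(lra) ltac:(lra)).
        assert (Hyp := Hpos y ltac:(lra)).
        replace (y - x) with D in Hstep by lra.
        nra. }
    assert (Hlast := Cl (pred n) ltac:(lia)).
    replace (INR (pred n)) with (INR n - 1) in Hlast.
    2:{ replace n with (S (pred n)) at 1 by lia. rewrite S_INR. ring. }
    replace (r1 - (INR n - 1) * D) with D in Hlast by lra.
    assert (HDr: D <= r1).
    { rewrite <- HnD. assert (0 <= (INR n - 1) * D) by (apply Rmult_le_pos; lra). lra. }
    assert (H0D := H0 D ltac:(split; lra)).
    assert (ED := Emon D r1 ltac:(lra) ltac:(lra)).
    assert (HD0 := Hpos D ltac:(split; lra)).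
    assert (EDp := Epos D HD).
    fold D. nra. }
  destruct (Rle_or_lt 0 (Q 0)) as [h|h]; auto.
  exfalso.
  assert (HEr := Epos r1 Hr1).
  set (C := E r1 * M * r1).
  assert (HC: 0 <= C) by (unfold C; apply Rmult_le_pos; [apply Rmult_le_pos|]; lra).
  set (X := C / - Q 0).
  destruct (archimed X) as [Ha _].
  set (n := Z.to_nat (up X)).
  assert (Hup: (0 < up X)%Z).
  { apply lt_IZR. assert (0 <= X) by (unfold X; apply Rmult_le_pos; [lra| left; apply Rinv_0_lt_compat; lra]). simpl. lra. }
  assert (Hn1: (1 <= n)%nat) by (unfold n; lia).
  assert (HnR : INR n = IZR (up X)).
  { unfold n. rewrite INR_IZR_INZ. rewrite Z2Nat.id by lia. reflexivity. }
  specialize (Hn n Hn1).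
  assert (HnP: 0 < INR n) by (apply lt_0_INR; lia).
  replace (- (E r1 * M * (r1 / INR n))) with (- (C / INR n)) in Hn by (unfold C; field; lra).
  assert (Hl1: C / - Q 0 < INR n) by (unfold X in *; lra).
  assert (C < INR n * (- Q 0)).
  { apply (Rmult_lt_compat_r (- Q 0)) in Hl1; [|lra].
    unfold Rdiv in Hl1. rewrite Rmult_assoc, Rinv_l in Hl1 by lra. lra. }
  assert (C / INR n < - Q 0).
  { apply (Rmult_lt_reg_r (INR n)); auto. unfold Rdiv. rewrite Rmult_assoc, Rinv_l by lra. lra. }
  lra.
Qed.

Lemma exp_le' x y : x <= y -> exp x <= exp y.
Proof. intros [h|h]; [left; apply exp_increasing; auto| subst; lra]. Qed.

Definition Kc (m1 m2 s rho : R) :=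
  s * m1 * exp ((1 - s) * (rho * (ln m1 - ln m2) / (1 - rho))).

Lemma tail_idx (w m1 m2 u v s rho : R) : 0 < w -> 0 < m2 -> m2 <= m1 -> 0 <= u -> 0 <= v ->
  w * exp (- u) = Rmin w m1 -> w * exp (- v) = Rmin w m2 -> 0 <= s <= 1 -> 0 < rho < 1 ->
  Kc m1 m2 s rho * (u - rho * v) <=
  w * ((exp (- (rho * s * v)) - exp (- v)) - (exp (- (s * u)) - exp (- u))).
Proof.
  intros Hw Hm2 Hm Hu Hv Eu Ev Hs Hr.
  assert (HK: 0 <= Kc m1 m2 s rho).
  { unfold Kc. apply Rmult_le_pos; [apply Rmult_le_pos; lra|]. left; apply exp_pos. }
  destruct (Rle_or_lt w m1) as [h|h].
  - rewrite Rmin_left in Eu by lra.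
    assert (exp (- u) = 1) by (apply (Rmult_eq_reg_l w); lra).
    assert (u = 0). { rewrite <- exp_0 in H. apply exp_inv in H. lra. }
    subst u. replace (- (s * 0)) with 0 by ring. replace (- 0) with 0 by ring.
    assert (exp (- v) <= exp (- (rho * s * v))).
    { apply exp_le'. assert (rho * s <= 1) by nra. nra. }
    assert (0 <= rho * v) by nra. nra.
  - rewrite Rmin_right in Eu by lra. rewrite Rmin_right in Ev by lra.
    assert (Hu': u = ln w - ln m1).
    { assert (exp (- u) = m1 / w) by (rewrite <- Eu; field; lra).
      assert (- u = ln (m1 / w)) by (rewrite <- H; rewrite ln_exp; auto).
      unfold Rdiv in H0; rewrite ln_mult, ln_Rinv in H0 by (try apply Rinv_0_lt_compat; lra); lra. }
    assert (Hv': v = ln w - ln m2).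
    { assert (exp (- v) = m2 / w) by (rewrite <- Ev; field; lra).
      assert (- v = ln (m2 / w)) by (rewrite <- H; rewrite ln_exp; auto).
      unfold Rdiv in H0; rewrite ln_mult, ln_Rinv in H0 by (try apply Rinv_0_lt_compat; lra); lra. }
    set (D := ln m1 - ln m2).
    assert (HD: 0 <= D). { unfold D. assert (ln m2 <= ln m1) by (apply ln_le; lra). lra. }
    assert (Hvu: v = u + D) by (unfold D; lra).
    set (us := rho * D / (1 - rho)).
    assert (Hx: u - rho * v = (1 - rho) * (u - us)).
    { unfold us. rewrite Hvu. field. lra. }
    set (y := w * exp (- (s * u))).
    assert (Hy: y = m1 * exp ((1 - s) * u)).
    { unfold y. rewrite <- Eu. rewrite Rmult_assoc, <- exp_plus. f_equal. f_equal. ring. }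
    assert (E1: exp (- (rho * s * v)) = exp (- (s * u)) * exp (s * u - rho * s * v)).
    { rewrite <- exp_plus. f_equal. ring. }
    assert (E2: 1 + (s * u - rho * s * v) <= exp (s * u - rho * s * v)) by apply exp_ineq1_le.
    assert (Hm1v: w * exp (- v) <= w * exp (- u)) by lra.
    assert (Hey: 0 < exp (- (s * u))) by apply exp_pos.
    assert (R1: y * (s * (u - rho * v)) <=
       w * ((exp (- (rho * s * v)) - exp (- v)) - (exp (- (s * u)) - exp (- u)))).
    { rewrite E1. unfold y.
      assert (w * exp (- (s * u)) * (s * u - rho * s * v) <= w * exp (- (s * u)) * (exp (s * u - rho * s * v) - 1)).
      { apply Rmult_le_compat_l; [|lra]. left. apply Rmult_lt_0_compat; auto. }
      nra. }
    eapply Rle_trans; [|exact R1].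
    unfold Kc. fold D. fold us.
    replace (s * m1 * exp ((1 - s) * us) * (u - rho * v)) with
       (s * (1 - rho) * ((m1 * exp ((1 - s) * us)) * (u - us))) by (rewrite Hx; ring).
    replace (y * (s * (u - rho * v))) with (s * (1 - rho) * (y * (u - us))) by (rewrite Hx; ring).
    apply Rmult_le_compat_l; [nra|].
    rewrite Hy.
    destruct (Rle_or_lt us u) as [h2|h2].
    + assert (exp ((1 - s) * us) <= exp ((1 - s) * u)) by (apply exp_le'; nra).
      apply Rmult_le_compat_r; [lra|]. apply Rmult_le_compat_l; lra.
    + assert (exp ((1 - s) * u) <= exp ((1 - s) * us)) by (apply exp_le'; nra).
      assert (0 <= (m1 * (exp ((1 - s) * us) - exp ((1 - s) * u))) * (us - u)).
      { apply Rmult_le_pos; [apply Rmult_le_pos|]; lra. }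
      nra.
Qed.
Lemma pr_pos beta Nf i : (1 <= Nf)%nat -> 0 < p_r beta Nf i.
Proof.
  intros HN. unfold p_r. apply Rdiv_lt_0_compat.
  - unfold Rpower. apply exp_pos.
  - rewrite (sum_Sn_m _ 1 Nf) by lia.
    assert (0 <= sum_n_m (fun k => Rpower (INR k) (- beta)) 2 Nf).
    { assert (sum_n_m (fun _ => 0) 2 Nf <= sum_n_m (fun k => Rpower (INR k) (- beta)) 2 Nf).
      { apply sum_n_m_le. intros; unfold Rpower; left; apply exp_pos. }
      rewrite sum_n_m_const in H. lra. }
    change (0 < Rpower (INR 1) (- beta) + sum_n_m (fun k => Rpower (INR k) (- beta)) 2 Nf).
    assert (0 < Rpower (INR 1) (- beta)) by (unfold Rpower; apply exp_pos). lra.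
Qed.

Lemma po_alt beta lam Nf pc rc :
  p_o beta lam Nf pc rc =
  sum_n_m (fun i => p_r beta Nf i * (1 - exp (- ((lam * PI * rc ^ 2) * pc i)))) 1 Nf.
Proof.
  unfold p_o. apply sum_n_m_ext. intros i. do 3 f_equal. ring.
Qed.

Lemma kkt beta lam Nf rc pc i j : 0 < lam -> 0 < rc -> (1 <= Nf)%nat ->
  optimal_pc beta lam Nf rc pc -> (1 <= i <= Nf)%nat -> (1 <= j <= Nf)%nat -> 0 < pc i ->
  p_r beta Nf j * exp (- ((lam * PI * rc ^ 2) * pc j)) <=
  p_r beta Nf i * exp (- ((lam * PI * rc ^ 2) * pc i)).
Proof.
  intros Hl Hrc HN [[Hsum Hnn] Hopt] Hi Hj Hpi.
  set (a := lam * PI * rc ^ 2).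
  assert (Ha: 0 < a) by (unfold a; assert (0 < PI) by apply PI_RGT_0;
    apply Rmult_lt_0_compat; [nra| apply pow_lt; lra]).
  set (w := p_r beta Nf).
  set (Ai := w i * exp (- (a * pc i))). set (Aj := w j * exp (- (a * pc j))).
  destruct (Rle_or_lt Aj Ai) as [h|h]; auto. exfalso.
  assert (HAi: 0 < Ai) by (unfold Ai, w; apply Rmult_lt_0_compat; [apply pr_pos; auto| apply exp_pos]).
  assert (Hij: i <> j). { intro e; subst j. unfold Ai, Aj in h. lra. }
  set (Rt := Aj / Ai).
  assert (HRt: 1 < Rt). { unfold Rt. apply (Rmult_lt_reg_r Ai); auto. unfold Rdiv.
    rewrite Rmult_assoc, Rinv_l by lra. lra. }
  assert (HlnRt: 0 < ln Rt) by (rewrite <- ln_1; apply ln_increasing; lra).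
  set (d := Rmin (pc i) (ln Rt / (2 * a))).
  assert (Hd: 0 < d). { unfold d. apply Rmin_pos; auto. apply Rdiv_lt_0_compat; lra. }
  assert (Hdpi: d <= pc i) by apply Rmin_l.
  assert (Hexp: exp (a * d) < Rt).
  { assert (a * d <= ln Rt / 2).
    { assert (d <= ln Rt / (2 * a)) by apply Rmin_r.
      apply (Rmult_le_compat_l a) in H; [|lra].
      replace (a * (ln Rt / (2 * a))) with (ln Rt / 2) in H by (field; lra). auto. }
    rewrite <- (exp_ln Rt) by lra. apply exp_increasing. lra. }
  set (q := fun k => pc k + dl (- d) i k + dl d j k).
  assert (Hfeas: feasible_pc Nf q).
  { split.
    - unfold q. rewrite sumR_plus, sumR_plus, Hsum.
      rewrite (sumR_delta (- d) i 1 Nf), (sumR_delta d j 1 Nf) by lia. Req. ring.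
    - intros k Hk. unfold q, dl. destruct (Nat.eqb_spec k i); destruct (Nat.eqb_spec k j); subst;
        try (exfalso; auto; fail); try (specialize (Hnn _ Hk)); lra. }
  specialize (Hopt q Hfeas). rewrite !po_alt in Hopt. fold a w in Hopt.
  set (X := w i * (exp (- (a * pc i)) - exp (- (a * (pc i - d))))).
  set (Y := w j * (exp (- (a * pc j)) - exp (- (a * (pc j + d))))).
  assert (Hdiff: @eq R (sum_n_m (fun k => w k * (1 - exp (- (a * q k)))) 1 Nf -
        sum_n_m (fun k => w k * (1 - exp (- (a * pc k)))) 1 Nf) (X + Y)).
  { rewrite <- sumR_minus.
    rewrite (sum_n_m_ext _ (fun k => dl X i k + dl Y j k)).
    - rewrite sumR_plus, (sumR_delta X i 1 Nf), (sumR_delta Y j 1 Nf) by lia. reflexivity.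
    - intros k. unfold q, X, Y, dl. destruct (Nat.eqb_spec k i); destruct (Nat.eqb_spec k j); subst;
        try (exfalso; auto; fail).
      + replace (pc i + - d + 0) with (pc i - d) by ring. Req; ring.
      + replace (pc j + 0 + d) with (pc j + d) by ring. Req; ring.
      + replace (pc k + 0 + 0) with (pc k) by ring. Req; ring. }
  assert (HXY: 0 < X + Y).
  { assert (E1: exp (- (a * (pc i - d))) = exp (- (a * pc i)) * exp (a * d))
      by (rewrite <- exp_plus; f_equal; ring).
    assert (E2: exp (- (a * (pc j + d))) = exp (- (a * pc j)) * exp (- (a * d)))
      by (rewrite <- exp_plus; f_equal; ring).
    assert (E3: exp (a * d) * exp (- (a * d)) = 1) by (rewrite <- exp_plus, <- exp_0; f_equal; ring).
    assert (E4: exp (- (a * d)) < 1) by (rewrite <- exp_0; apply exp_increasing; nra).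
    assert (E5: 0 < exp (a * d)) by apply exp_pos.
    assert (Hk: Ai * exp (a * d) < Aj).
    { apply (Rmult_lt_compat_l Ai) in Hexp; auto. unfold Rt in Hexp.
      replace (Ai * (Aj / Ai)) with Aj in Hexp by (field; lra). auto. }
    assert (X + Y = (1 - exp (- (a * d))) * (Aj - Ai * exp (a * d))).
    { unfold X, Y, Ai, Aj. rewrite E1, E2.
      assert (E6: exp (- (a * d)) = / exp (a * d)).
      { apply (Rmult_eq_reg_l (exp (a * d))); [|lra]. rewrite E3. field. lra. }
      rewrite E6. field. lra. }
    rewrite H. apply Rmult_lt_0_compat; lra. }
  lra.
Qed.

Lemma struct_opt beta lam Nf rc pc : 0 < lam -> 0 < rc -> (1 <= Nf)%nat ->
  optimal_pc beta lam Nf rc pc -> exists mu, 0 < mu /\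
  forall i, (1 <= i <= Nf)%nat ->
    p_r beta Nf i * exp (- ((lam * PI * rc ^ 2) * pc i)) = Rmin (p_r beta Nf i) mu.
Proof.
  intros Hl Hrc HN Hopt.
  assert (Hopt' := Hopt). destruct Hopt' as [[Hsum Hnn] _].
  set (a := lam * PI * rc ^ 2).
  assert (Ha: 0 < a) by (unfold a; assert (0 < PI) by apply PI_RGT_0;
    apply Rmult_lt_0_compat; [nra| apply pow_lt; lra]).
  destruct (sumR_pos_ex pc 1 Nf ltac:(rewrite Hsum; lra)) as [i0 [Hi0 Hp0]].
  exists (p_r beta Nf i0 * exp (- (a * pc i0))). split.
  { apply Rmult_lt_0_compat; [apply pr_pos; auto| apply exp_pos]. }
  intros i Hi.
  destruct (Rle_lt_or_eq_dec 0 (pc i) (Hnn i Hi)) as [h|h].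
  - assert (K1 := kkt beta lam Nf rc pc i i0 Hl Hrc HN Hopt Hi Hi0 h).
    assert (K2 := kkt beta lam Nf rc pc i0 i Hl Hrc HN Hopt Hi0 Hi Hp0).
    fold a in K1, K2.
    assert (exp (- (a * pc i)) <= 1) by (rewrite <- exp_0; apply exp_le'; nra).
    assert (0 < p_r beta Nf i) by (apply pr_pos; auto).
    rewrite Rmin_right; [lra|]. nra.
  - assert (K2 := kkt beta lam Nf rc pc i0 i Hl Hrc HN Hopt Hi0 Hi Hp0). fold a in K2.
    rewrite <- h in *. rewrite Rmult_0_r, Ropp_0, exp_0, Rmult_1_r in *.
    rewrite Rmin_left; auto.
Qed.

Lemma mu_order beta Nf a1 a2 p q m1 m2 : 0 < a1 < a2 -> (1 <= Nf)%nat ->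
  feasible_pc Nf p -> feasible_pc Nf q ->
  (forall i, (1 <= i <= Nf)%nat -> p_r beta Nf i * exp (- (a1 * p i)) = Rmin (p_r beta Nf i) m1) ->
  (forall i, (1 <= i <= Nf)%nat -> p_r beta Nf i * exp (- (a2 * q i)) = Rmin (p_r beta Nf i) m2) ->
  m2 <= m1.
Proof.
  intros Ha HN [Sp Np] [Sq Nq] E1 E2.
  destruct (Rle_or_lt m2 m1) as [h|h]; auto. exfalso.
  assert (sum_n_m (fun i => a2 * q i) 1 Nf <= sum_n_m (fun i => a1 * p i) 1 Nf).
  { apply sumR_le_loc. intros i Hi.
    destruct (Rle_or_lt (a2 * q i) (a1 * p i)) as [h2|h2]; auto. exfalso.
    assert (exp (- (a2 * q i)) < exp (- (a1 * p i))) by (apply exp_increasing; lra).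
    assert (Hw: 0 < p_r beta Nf i) by (apply pr_pos; auto).
    specialize (E1 i Hi). specialize (E2 i Hi).
    assert (Rmin (p_r beta Nf i) m1 <= Rmin (p_r beta Nf i) m2).
    { unfold Rmin. destruct (Rle_dec (p_r beta Nf i) m1); destruct (Rle_dec (p_r beta Nf i) m2); lra. }
    nra. }
  rewrite !sumR_scal, Sp, Sq in H. lra.
Qed.

Definition ee (lam p x : R) := exp (- lam * p * PI * x ^ 2).

Lemma tail_dom beta lam Nf (p q : nat -> R) r1 r2 t : 0 < lam -> (1 <= Nf)%nat ->
  0 < r1 -> r1 < r2 -> optimal_pc beta lam Nf r1 p -> optimal_pc beta lam Nf r2 q ->
  0 <= t <= r1 ->
  0 <= sum_n_m (fun i => p_r beta Nf i *
     ((ee lam (q i) t - ee lam (q i) r2) - (ee lam (p i) t - ee lam (p i) r1))) 1 Nf.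
Proof.
  intros Hl HN Hr1 Hr12 Op Oq Ht.
  destruct (struct_opt beta lam Nf r1 p Hl Hr1 HN Op) as [m1 [Hm1 S1]].
  destruct (struct_opt beta lam Nf r2 q Hl ltac:(lra) HN Oq) as [m2 [Hm2 S2]].
  assert (HPI: 0 < PI) by apply PI_RGT_0.
  set (a1 := lam * PI * r1 ^ 2) in *. set (a2 := lam * PI * r2 ^ 2) in *.
  assert (Ha1: 0 < a1) by (unfold a1; apply Rmult_lt_0_compat; [nra| apply pow_lt; lra]).
  assert (Ha12: a1 < a2).
  { unfold a1, a2. apply Rmult_lt_compat_l; [nra|]. simpl. nra. }
  destruct Op as [Fp _]. destruct Oq as [Fq _].
  assert (Hm := mu_order beta Nf a1 a2 p q m1 m2 ltac:(lra) HN Fp Fq S1 S2).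
  set (s := t ^ 2 / r1 ^ 2). set (rho := r1 ^ 2 / r2 ^ 2).
  assert (Hs: 0 <= s <= 1).
  { unfold s. assert (0 < r1 ^ 2) by (apply pow_lt; lra). split.
    - apply Rmult_le_pos; [apply pow_le; lra| left; apply Rinv_0_lt_compat; lra].
    - apply (Rmult_le_reg_r (r1 ^ 2)); auto. unfold Rdiv. rewrite Rmult_assoc, Rinv_l by lra.
      simpl. nra. }
  assert (Hrho: 0 < rho < 1).
  { unfold rho. assert (0 < r1 ^ 2) by (apply pow_lt; lra). assert (0 < r2 ^ 2) by (apply pow_lt; lra).
    split. apply Rdiv_lt_0_compat; lra.
    apply (Rmult_lt_reg_r (r2 ^ 2)); auto. unfold Rdiv. rewrite Rmult_assoc, Rinv_l by lra.
    simpl. nra. }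
  destruct Fp as [Sp Np]. destruct Fq as [Sq Nq].
  set (K := Kc m1 m2 s rho).
  apply Rle_trans with (sum_n_m (fun i => K * (a1 * p i - rho * (a2 * q i))) 1 Nf).
  - rewrite sumR_scal, sumR_minus, sumR_scal, sumR_scal, sumR_scal, Sp, Sq.
    assert (a1 - rho * a2 = 0).
    { unfold a1, a2, rho. field. lra. }
    rewrite !Rmult_1_r, H, Rmult_0_r. lra.
  - apply sumR_le_loc. intros i Hi.
    assert (Hw := pr_pos beta Nf i HN).
    assert (T := tail_idx (p_r beta Nf i) m1 m2 (a1 * p i) (a2 * q i) s rho Hw Hm2 Hm
      ltac:(apply Rmult_le_pos; [lra| apply Np; auto]) ltac:(apply Rmult_le_pos; [lra| apply Nq; auto])
      (S1 i Hi) (S2 i Hi) Hs Hrho).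
    fold K in T. eapply Rle_trans; [exact T|]. right. unfold ee. f_equal. f_equal; f_equal; f_equal.
    + unfold rho, s, a2. field. lra.
    + unfold a2. ring.
    + unfold s, a1. field. lra.
    + unfold a1. ring.
Qed.

Lemma part1 beta lam Nf (p q : nat -> R) r1 r2 : 0 < lam -> (1 <= Nf)%nat ->
  0 < r1 -> r1 < r2 -> optimal_pc beta lam Nf r1 p -> optimal_pc beta lam Nf r2 q ->
  p_o beta lam Nf p r1 <= p_o beta lam Nf q r2.
Proof.
  intros Hl HN Hr1 Hr12 Op Oq.
  apply Rle_trans with (p_o beta lam Nf p r2).
  - destruct Op as [[_ Np] _]. unfold p_o. apply sumR_le_loc. intros i Hi.
    apply Rmult_le_compat_l; [left; apply pr_pos; auto|].
    assert (HPI: 0 < PI) by apply PI_RGT_0.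
    assert (0 <= p i) by auto.
    assert (exp (- lam * p i * PI * r2 ^ 2) <= exp (- lam * p i * PI * r1 ^ 2)).
    { apply exp_le'. assert (r1 ^ 2 <= r2 ^ 2) by (simpl; nra).
      assert (0 <= lam * p i * PI) by (apply Rmult_le_pos; [apply Rmult_le_pos|]; lra).
      replace (- lam * p i * PI * r2 ^ 2) with (- (lam * p i * PI * r2 ^ 2)) by ring.
      replace (- lam * p i * PI * r1 ^ 2) with (- (lam * p i * PI * r1 ^ 2)) by ring.
      nra. }
    lra.
  - destruct Oq as [_ Oq]. apply Oq. apply Op.
Qed.

Lemma fdist_derive lam p x :
  is_derive (fun r => - ee lam p r) x (f_dist lam p x).
Proof.
  unfold ee, f_dist. auto_derive; auto. Req. replace (x * (x * 1)) with (x ^ 2) by ring. ring.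
Qed.

Lemma fdist_cont lam p x : continuous (f_dist lam p) x.
Proof.
  apply (@ex_derive_continuous R_AbsRing R_NormedModule). unfold f_dist. auto_derive. auto.
Qed.

Lemma RInt_fdist lam p x y : RInt (f_dist lam p) x y = ee lam p x - ee lam p y.
Proof.
  apply is_RInt_unique.
  replace (ee lam p x - ee lam p y) with (minus ((fun r => - ee lam p r) y) ((fun r => - ee lam p r) x)).
  - apply (@is_RInt_derive R_CompleteNormedModule (fun r => - ee lam p r) (f_dist lam p)); intros; [apply fdist_derive| apply fdist_cont].
  - unfold minus, plus, opp; simpl. ring.
Qed.

Lemma ex_RInt_fdist lam p x y : ex_RInt (f_dist lam p) x y.
Proof. apply (@ex_RInt_continuous R_CompleteNormedModule). intros; apply fdist_cont. Qed.

Lemma ln_ratio x c : 0 < x -> 1 <= c -> ln (1 + c * x) <= c * ln (1 + x).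
Proof.
  intros Hx Hc.
  assert (Hkey: x / (1 + x) < ln (1 + x)).
  { set (y := / (1 + x)).
    assert (Hy: 0 < y) by (unfold y; apply Rinv_0_lt_compat; lra).
    assert (Hy1: y < 1). { unfold y. rewrite <- Rinv_1. apply Rinv_lt_contravar; lra. }
    assert (ln y < 0) by (rewrite <- ln_1; apply ln_increasing; lra).
    assert (E1 := exp_ineq1 (ln y) ltac:(lra)). rewrite exp_ln in E1 by lra.
    assert (ln (1 + x) = - ln y) by (unfold y; rewrite ln_Rinv by lra; ring).
    assert (x / (1 + x) = 1 - y) by (unfold y; field; lra). lra. }
  destruct (Rle_lt_or_eq_dec 1 c Hc) as [h|h].
  2:{ subst c. replace (1 * x) with x by ring. lra. }
  set (phi := fun c => c * ln (1 + x) - ln (1 + c * x)).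
  assert (phi 1 < phi c).
  { apply (incr_function_le phi (Finite 1) p_infty (fun c => ln (1 + x) - x / (1 + c * x))).
    - intros z Hz _. simpl in Hz. unfold phi. auto_derive.
      + nra.
      + field. nra.
    - intros z Hz _. simpl in Hz.
      assert (x / (1 + z * x) <= x / (1 + x)).
      { apply Rmult_le_compat_l; [lra|]. apply Rinv_le_contravar; nra. }
      lra.
    - simpl; lra.
    - auto.
    - simpl; auto. }
  unfold phi in H. replace (1 * x) with x in H by ring. lra.
Qed.

Lemma ln2_pos : 0 < ln 2.
Proof. rewrite <- ln_1. apply ln_increasing; lra. Qed.

Lemma Rpower_pos' x y : 0 < Rpower x y.
Proof. unfold Rpower. apply exp_pos. Qed.

Lemma cost_form F W sigma2 eta Pc alpha r Pt : 0 < W -> 0 < sigma2 -> 0 < Pt ->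
  energy_cost F W sigma2 eta Pc alpha r Pt =
  (F * ln 2 * (/ eta * Pt + Pc) / W) / ln (1 + Pt * Rpower r (- alpha) / sigma2).
Proof.
  intros HW Hs HP. unfold energy_cost, log2.
  assert (0 < ln (1 + Pt * Rpower r (- alpha) / sigma2)).
  { rewrite <- ln_1. apply ln_increasing; [lra|].
    assert (0 < Pt * Rpower r (- alpha) / sigma2).
    { apply Rdiv_lt_0_compat; auto. apply Rmult_lt_0_compat; auto. apply Rpower_pos'. }
    lra. }
  assert (Hl2 := ln2_pos). set (B := / eta * Pt + Pc). field. repeat split; lra.
Qed.

Lemma cost_pos F W sigma2 eta Pc alpha r Pt : 0 < F -> 0 < W -> 0 < sigma2 -> 0 < eta -> 0 < Pc ->
  0 < Pt -> 0 < energy_cost F W sigma2 eta Pc alpha r Pt.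
Proof.
  intros HF HW Hs He HPc HP. rewrite cost_form by auto.
  assert (0 < ln (1 + Pt * Rpower r (- alpha) / sigma2)).
  { rewrite <- ln_1. apply ln_increasing; [lra|].
    assert (0 < Pt * Rpower r (- alpha) / sigma2).
    { apply Rdiv_lt_0_compat; auto. apply Rmult_lt_0_compat; auto. apply Rpower_pos'. }
    lra. }
  assert (Hl2 := ln2_pos).
  apply Rdiv_lt_0_compat; auto. apply Rdiv_lt_0_compat; auto.
  apply Rmult_lt_0_compat; [nra|]. assert (0 < / eta) by (apply Rinv_0_lt_compat; lra). nra.
Qed.

Lemma Ec_props F W sigma2 eta Pc Pmax alpha r :
  0 < F -> 0 < W -> 0 < sigma2 -> 0 < eta -> 0 < Pc -> 0 < Pmax ->
  (forall Pt, 0 < Pt <= Pmax -> Ec_star F W sigma2 eta Pc Pmax alpha r <= energy_cost F W sigma2 eta Pc alpha r Pt) /\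
  (forall b, (forall Pt, 0 < Pt <= Pmax -> b <= energy_cost F W sigma2 eta Pc alpha r Pt) ->
      b <= Ec_star F W sigma2 eta Pc Pmax alpha r) /\
  0 <= Ec_star F W sigma2 eta Pc Pmax alpha r.
Proof.
  intros HF HW Hs He HPc HPm. unfold Ec_star.
  set (S := fun y => exists Pt, 0 < Pt <= Pmax /\ y = energy_cost F W sigma2 eta Pc alpha r Pt).
  destruct (Glb_Rbar_correct S) as [Hlb Hgr].
  assert (H0: Rbar_le 0 (Glb_Rbar S)).
  { apply Hgr. intros y [Pt [HPt ->]]. simpl. left. apply cost_pos; lra. }
  assert (H1: Rbar_le (Glb_Rbar S) (energy_cost F W sigma2 eta Pc alpha r Pmax)).
  { apply Hlb. exists Pmax. split; [lra|auto]. }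
  destruct (Glb_Rbar S) as [e| |] eqn:Eg; simpl in H0, H1; try contradiction.
  simpl. split; [|split].
  - intros Pt HPt. assert (Rbar_le (Finite e) (energy_cost F W sigma2 eta Pc alpha r Pt)).
    { apply Hlb. exists Pt; auto. }
    simpl in H. auto.
  - intros b Hb. assert (Rbar_le b (Finite e)).
    { apply Hgr. intros y [Pt [HPt ->]]. simpl. apply Hb; auto. }
    simpl in H; auto.
  - auto.
Qed.

Lemma Rpower_anti r r' alpha : 0 < r -> r <= r' -> 0 < alpha ->
  Rpower r' (- alpha) <= Rpower r (- alpha).
Proof.
  intros Hr Hrr Ha. unfold Rpower. apply exp_le'.
  assert (ln r <= ln r') by (apply ln_le; lra). nra.
Qed.

Lemma Rpower_split r r' alpha : 0 < r -> 0 < r' ->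
  Rpower r (- alpha) = Rpower (r' / r) alpha * Rpower r' (- alpha).
Proof.
  intros Hr Hr'. unfold Rpower. rewrite <- exp_plus. f_equal.
  unfold Rdiv. rewrite ln_mult, ln_Rinv by (try apply Rinv_0_lt_compat; lra). ring.
Qed.

Lemma cost_mono F W sigma2 eta Pc alpha r r' Pt :
  0 < F -> 0 < W -> 0 < sigma2 -> 0 < eta -> 0 < Pc -> 0 < alpha -> 0 < Pt ->
  0 < r -> r <= r' ->
  energy_cost F W sigma2 eta Pc alpha r Pt <= energy_cost F W sigma2 eta Pc alpha r' Pt.
Proof.
  intros HF HW Hs He HPc Ha HP Hr Hrr.
  rewrite !cost_form by auto.
  assert (Hk := Rpower_anti r r' alpha Hr Hrr Ha).
  assert (Hk' := Rpower_pos' r' (- alpha)).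
  assert (0 < Pt * Rpower r' (- alpha) / sigma2) by (apply Rdiv_lt_0_compat; auto; apply Rmult_lt_0_compat; auto).
  assert (Pt * Rpower r' (- alpha) / sigma2 <= Pt * Rpower r (- alpha) / sigma2).
  { apply Rmult_le_compat_r; [left; apply Rinv_0_lt_compat; lra|]. apply Rmult_le_compat_l; lra. }
  assert (0 < ln (1 + Pt * Rpower r' (- alpha) / sigma2)) by (rewrite <- ln_1; apply ln_increasing; lra).
  assert (ln (1 + Pt * Rpower r' (- alpha) / sigma2) <= ln (1 + Pt * Rpower r (- alpha) / sigma2))
    by (apply ln_le; lra).
  assert (Hl2 := ln2_pos).
  assert (0 < F * ln 2 * (/ eta * Pt + Pc) / W).
  { apply Rdiv_lt_0_compat; auto. apply Rmult_lt_0_compat; [nra|].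
    assert (0 < / eta) by (apply Rinv_0_lt_compat; lra). nra. }
  unfold Rdiv at 1 3. apply Rmult_le_compat_l; [lra|]. apply Rinv_le_contravar; lra.
Qed.

Lemma cost_ratio F W sigma2 eta Pc alpha r r' Pt :
  0 < F -> 0 < W -> 0 < sigma2 -> 0 < eta -> 0 < Pc -> 0 < alpha -> 0 < Pt ->
  0 < r -> r <= r' ->
  energy_cost F W sigma2 eta Pc alpha r' Pt <=
  Rpower (r' / r) alpha * energy_cost F W sigma2 eta Pc alpha r Pt.
Proof.
  intros HF HW Hs He HPc Ha HP Hr Hrr.
  rewrite !cost_form by auto.
  rewrite (Rpower_split r r' alpha) by lra.
  set (c := Rpower (r' / r) alpha).
  assert (Hc: 1 <= c).
  { unfold c, Rpower. rewrite <- exp_0. apply exp_le'.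
    assert (1 <= r' / r). { apply (Rmult_le_reg_r r); auto. unfold Rdiv. rewrite Rmult_assoc, Rinv_l; lra. }
    assert (0 <= ln (r' / r)) by (rewrite <- ln_1; apply ln_le; lra). nra. }
  set (x := Pt * Rpower r' (- alpha) / sigma2).
  assert (Hx: 0 < x) by (unfold x; apply Rdiv_lt_0_compat; auto; apply Rmult_lt_0_compat; auto; apply Rpower_pos').
  replace (Pt * (c * Rpower r' (- alpha)) / sigma2) with (c * x) by (unfold x; field; lra).
  assert (L := ln_ratio x c Hx Hc).
  assert (0 < ln (1 + x)) by (rewrite <- ln_1; apply ln_increasing; lra).
  assert (0 < ln (1 + c * x)) by (rewrite <- ln_1; apply ln_increasing; nra).
  assert (Hl2 := ln2_pos).
  set (A := F * ln 2 * (/ eta * Pt + Pc) / W).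
  assert (0 < A).
  { unfold A. apply Rdiv_lt_0_compat; auto. apply Rmult_lt_0_compat; [nra|].
    assert (0 < / eta) by (apply Rinv_0_lt_compat; lra). nra. }
  apply (Rmult_le_reg_r (ln (1 + x) * ln (1 + c * x))); [nra|].
  replace (A / ln (1 + x) * (ln (1 + x) * ln (1 + c * x))) with (A * ln (1 + c * x)) by (field; lra).
  replace (c * (A / ln (1 + c * x)) * (ln (1 + x) * ln (1 + c * x))) with (A * (c * ln (1 + x))) by (field; lra).
  apply Rmult_le_compat_l; lra.
Qed.

Lemma E_mono F W sigma2 eta Pc Pmax alpha r r' :
  0 < F -> 0 < W -> 0 < sigma2 -> 0 < eta -> 0 < Pc -> 0 < Pmax -> 0 < alpha ->
  0 < r -> r <= r' ->
  Ec_star F W sigma2 eta Pc Pmax alpha r <= Ec_star F W sigma2 eta Pc Pmax alpha r'.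
Proof.
  intros HF HW Hs He HPc HPm Ha Hr Hrr.
  destruct (Ec_props F W sigma2 eta Pc Pmax alpha r) as [P1 _]; auto.
  destruct (Ec_props F W sigma2 eta Pc Pmax alpha r') as [_ [P2 _]]; auto.
  apply P2. intros Pt HPt. apply Rle_trans with (energy_cost F W sigma2 eta Pc alpha r Pt); [apply P1; auto|]. apply cost_mono; lra.
Qed.

Lemma E_ratio F W sigma2 eta Pc Pmax alpha r r' :
  0 < F -> 0 < W -> 0 < sigma2 -> 0 < eta -> 0 < Pc -> 0 < Pmax -> 0 < alpha ->
  0 < r -> r <= r' ->
  Ec_star F W sigma2 eta Pc Pmax alpha r' <= Rpower (r' / r) alpha * Ec_star F W sigma2 eta Pc Pmax alpha r.
Proof.
  intros HF HW Hs He HPc HPm Ha Hr Hrr.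
  destruct (Ec_props F W sigma2 eta Pc Pmax alpha r) as [_ [P2 _]]; auto.
  destruct (Ec_props F W sigma2 eta Pc Pmax alpha r') as [P1 _]; auto.
  assert (Hc := Rpower_pos' (r' / r) alpha).
  set (c := Rpower (r' / r) alpha) in *.
  assert (Ec_star F W sigma2 eta Pc Pmax alpha r' / c <= Ec_star F W sigma2 eta Pc Pmax alpha r).
  { apply P2. intros Pt HPt.
    assert (Q := cost_ratio F W sigma2 eta Pc alpha r r' Pt HF HW Hs He HPc Ha ltac:(lra) Hr Hrr).
    fold c in Q. assert (Q2 := P1 Pt HPt).
    apply (Rmult_le_reg_r c); auto. unfold Rdiv. rewrite Rmult_assoc, Rinv_l by lra. lra. }
  apply (Rmult_le_compat_l c) in H; [|lra].
  replace (c * (Ec_star F W sigma2 eta Pc Pmax alpha r' / c)) with (Ec_star F W sigma2 eta Pc Pmax alpha r') in H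
    by (field; lra). auto.
Qed.

Lemma cont_eps (f : R -> R) x : continuous f x ->
  forall eps, 0 < eps -> exists d, 0 < d /\ forall y, Rabs (y - x) < d -> Rabs (f y - f x) < eps.
Proof.
  intros Hc eps He. apply continuity_pt_filterlim in Hc.
  destruct (Hc eps He) as [d [Hd Hd2]]. exists d; split; auto.
  intros y Hy. destruct (Req_dec y x) as [->|hne].
  - rewrite Rminus_diag, Rabs_R0; auto.
  - apply Hd2. split; [split; [exact I| auto]| exact Hy].
Qed.

Lemma eps_cont (f : R -> R) x :
  (forall eps, 0 < eps -> exists d, 0 < d /\ forall y, Rabs (y - x) < d -> Rabs (f y - f x) < eps) ->
  continuous f x.
Proof.
  intros H. apply continuity_pt_filterlim. intros eps He.
  destruct (H eps He) as [d [Hd Hd2]]. exists d; split; auto.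
  intros y [_ Hy]. apply Hd2. exact Hy.
Qed.

Lemma Rpow_cont1 r alpha : 0 < r -> continuous (fun x => Rpower (x / r) alpha) r.
Proof.
  intros Hr. unfold Rpower.
  apply (@ex_derive_continuous R_AbsRing R_NormedModule). auto_derive.
  replace (r * / r) with 1 by (field; lra). lra.
Qed.

Lemma Rpow_cont2 r alpha : 0 < r -> continuous (fun x => Rpower (r / x) alpha) r.
Proof.
  intros Hr. unfold Rpower.
  apply (@ex_derive_continuous R_AbsRing R_NormedModule). auto_derive.
  replace (r * / r) with 1 by (field; lra). repeat split; lra.
Qed.

Lemma E_cont F W sigma2 eta Pc Pmax alpha r :
  0 < F -> 0 < W -> 0 < sigma2 -> 0 < eta -> 0 < Pc -> 0 < Pmax -> 0 < alpha -> 0 < r ->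
  continuous (Ec_star F W sigma2 eta Pc Pmax alpha) r.
Proof.
  intros HF HW Hs He HPc HPm Ha Hr.
  set (E := Ec_star F W sigma2 eta Pc Pmax alpha).
  apply eps_cont. intros eps Heps.
  assert (HEr: 0 <= E r) by (apply (Ec_props F W sigma2 eta Pc Pmax alpha r); auto).
  set (e' := eps / (E r + 1)).
  assert (He': 0 < e') by (unfold e'; apply Rdiv_lt_0_compat; lra).
  destruct (cont_eps _ _ (Rpow_cont1 r alpha Hr) e' He') as [d1 [Hd1 C1]].
  destruct (cont_eps _ _ (Rpow_cont2 r alpha Hr) e' He') as [d2 [Hd2 C2]].
  replace (Rpower (r / r) alpha) with 1 in C1, C2
    by (replace (r / r) with 1 by (field; lra); unfold Rpower; rewrite ln_1, Rmult_0_r, exp_0; auto).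
  exists (Rmin (Rmin d1 d2) (r / 2)). split.
  { apply Rmin_pos; [apply Rmin_pos|]; lra. }
  intros y Hy.
  assert (Hy1: Rabs (y - r) < d1) by (eapply Rlt_le_trans; [exact Hy|]; eapply Rle_trans; apply Rmin_l).
  assert (Hy2: Rabs (y - r) < d2)
    by (eapply Rlt_le_trans; [exact Hy|]; eapply Rle_trans; [apply Rmin_l| apply Rmin_r]).
  assert (Hy3: Rabs (y - r) < r / 2) by (eapply Rlt_le_trans; [exact Hy| apply Rmin_r]).
  assert (Hyp: 0 < y) by (apply Rabs_def2 in Hy3; lra).
  assert (Hk: e' * E r < eps).
  { unfold e'. apply (Rmult_lt_reg_r (E r + 1)); [lra|].
    replace (eps / (E r + 1) * E r * (E r + 1)) with (eps * E r) by (field; lra). nra. }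
  destruct (Rle_or_lt r y) as [h|h].
  - assert (A1 := E_mono F W sigma2 eta Pc Pmax alpha r y HF HW Hs He HPc HPm Ha Hr h).
    assert (A2 := E_ratio F W sigma2 eta Pc Pmax alpha r y HF HW Hs He HPc HPm Ha Hr h).
    specialize (C1 y Hy1). apply Rabs_def2 in C1. fold E in A1, A2.
    rewrite Rabs_pos_eq by lra. nra.
  - assert (A1 := E_mono F W sigma2 eta Pc Pmax alpha y r HF HW Hs He HPc HPm Ha Hyp ltac:(lra)).
    assert (A2 := E_ratio F W sigma2 eta Pc Pmax alpha y r HF HW Hs He HPc HPm Ha Hyp ltac:(lra)).
    specialize (C2 y Hy2). apply Rabs_def2 in C2. fold E in A1, A2.
    assert (HEy: 0 <= E y) by (apply (Ec_props F W sigma2 eta Pc Pmax alpha y); auto).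
    rewrite Rabs_left1 by lra.
    assert (E r - E y <= (Rpower (r / y) alpha - 1) * E y) by lra.
    assert (1 <= Rpower (r / y) alpha).
    { unfold Rpower. rewrite <- exp_0. apply exp_le'.
      assert (1 <= r / y). { apply (Rmult_le_reg_r y); auto. unfold Rdiv. rewrite Rmult_assoc, Rinv_l; lra. }
      assert (0 <= ln (r / y)) by (rewrite <- ln_1; apply ln_le; lra). nra. }
    assert ((Rpower (r / y) alpha - 1) * E y <= (Rpower (r / y) alpha - 1) * E r)
      by (apply Rmult_le_compat_l; lra).
    nra.
Qed.

Lemma ex_RInt_Ef (E : R -> R) (B lam p y : R) : 0 <= p -> 0 < lam -> 0 <= y -> 0 <= B ->
  (forall x, 0 < x -> continuous E x) -> (forall x, 0 < x <= 1 -> 0 <= E x <= B) ->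
  ex_RInt (fun x => E x * f_dist lam p x) 0 y.
Proof.
  intros Hp Hl Hy HB Hc Hb.
  set (G := fun x => if Rlt_dec 0 x then E x * f_dist lam p x else 0).
  apply (ex_RInt_ext G).
  { intros x Hx. rewrite Rmin_left in Hx by lra. unfold G. destruct (Rlt_dec 0 x); [auto| lra]. }
  apply (@ex_RInt_continuous R_CompleteNormedModule).
  intros z Hz. rewrite Rmin_left, Rmax_right in Hz by lra.
  destruct (Rle_lt_or_eq_dec 0 z (proj1 Hz)) as [hz|hz].
  - apply (@continuous_ext_loc R_UniformSpace R_UniformSpace G (fun x => E x * f_dist lam p x) z).
    + exists (mkposreal z hz). intros x Hx. unfold ball in Hx; simpl in Hx. unfold AbsRing_ball in Hx.
      unfold abs, minus, plus, opp in Hx; simpl in Hx. apply Rabs_def2 in Hx.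
      unfold G. destruct (Rlt_dec 0 x); [auto| lra].
    + apply (@continuous_mult R_UniformSpace R_AbsRing E (f_dist lam p)); [apply Hc; auto| apply fdist_cont].
  - subst z. apply eps_cont. intros eps Heps.
    assert (HPI: 0 < PI) by apply PI_RGT_0.
    set (C := B * (2 * PI * lam * p)).
    assert (HC: 0 <= C) by (unfold C; apply Rmult_le_pos; [lra|]; apply Rmult_le_pos; [nra|lra]).
    exists (Rmin 1 (eps / (C + 1))). split.
    { apply Rmin_pos; [lra| apply Rdiv_lt_0_compat; lra]. }
    intros x Hx. unfold G at 2. destruct (Rlt_dec 0 0); [lra|]. rewrite Rminus_0_r.
    unfold G. destruct (Rlt_dec 0 x) as [hx|hx].
    + rewrite Rminus_0_r in Hx. rewrite Rabs_pos_eq in Hx by lra.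
      assert (Hx1: x < 1) by (eapply Rlt_le_trans; [exact Hx| apply Rmin_l]).
      assert (Hx2: x < eps / (C + 1)) by (eapply Rlt_le_trans; [exact Hx| apply Rmin_r]).
      destruct (Hb x ltac:(lra)) as [Hb1 Hb2].
      assert (Hex: exp (- lam * p * PI * x ^ 2) <= 1).
      { rewrite <- exp_0. apply exp_le'. assert (0 <= lam * p * PI * x ^ 2).
        { apply Rmult_le_pos; [apply Rmult_le_pos; [apply Rmult_le_pos|]|]; try lra. apply pow_le; lra. }
        lra. }
      assert (Hex0: 0 < exp (- lam * p * PI * x ^ 2)) by apply exp_pos.
      unfold f_dist.
      assert (Hf0: 0 <= 2 * PI * x * lam * p) by (apply Rmult_le_pos; [|lra]; apply Rmult_le_pos; [|lra]; nra).
      assert (Hf: 2 * PI * x * lam * p * exp (- lam * p * PI * x ^ 2) <= 2 * PI * x * lam * p) by nra.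
      assert (Hf': 0 <= 2 * PI * x * lam * p * exp (- lam * p * PI * x ^ 2)) by nra.
      rewrite Rabs_pos_eq by nra.
      assert (E x * (2 * PI * x * lam * p * exp (- lam * p * PI * x ^ 2)) <= B * (2 * PI * x * lam * p))
        by (apply Rmult_le_compat; lra).
      assert (B * (2 * PI * x * lam * p) = C * x) by (unfold C; ring).
      assert (C * x < eps).
      { apply Rle_lt_trans with ((C + 1) * x); [nra|].
        apply (Rmult_lt_compat_l (C + 1)) in Hx2; [|lra].
        replace ((C + 1) * (eps / (C + 1))) with eps in Hx2 by (field; lra). lra. }
      lra.
    + rewrite Rabs_R0. lra.
Qed.

Lemma ee_diff_bound lam p x y R0 : 0 < lam -> 0 <= p -> 0 <= x <= y -> y <= R0 ->
  0 <= ee lam p x - ee lam p y <= 2 * lam * p * PI * R0 * (y - x).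
Proof.
  intros Hl Hp Hxy HyR. unfold ee.
  assert (HPI: 0 < PI) by apply PI_RGT_0.
  set (c := lam * p * PI).
  assert (Hc: 0 <= c) by (unfold c; apply Rmult_le_pos; [apply Rmult_le_pos|]; lra).
  replace (- lam * p * PI * x ^ 2) with (- (c * x ^ 2)) by (unfold c; ring).
  replace (- lam * p * PI * y ^ 2) with (- (c * x ^ 2) + - (c * (y ^ 2 - x ^ 2))) by (unfold c; ring).
  rewrite exp_plus.
  assert (Hyx: 0 <= y ^ 2 - x ^ 2) by (simpl; nra).
  assert (E1: exp (- (c * x ^ 2)) <= 1) by (rewrite <- exp_0; apply exp_le'; assert (0 <= c * x^2) by (apply Rmult_le_pos; [lra| apply pow_le; lra]); lra).
  assert (E0: 0 < exp (- (c * x ^ 2))) by apply exp_pos.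
  assert (E2: exp (- (c * (y ^ 2 - x ^ 2))) <= 1) by (rewrite <- exp_0; apply exp_le'; nra).
  assert (E3 := exp_ineq1_le (- (c * (y ^ 2 - x ^ 2)))).
  split.
  - nra.
  - assert (c * (y ^ 2 - x ^ 2) <= 2 * lam * p * PI * R0 * (y - x)).
    { replace (2 * lam * p * PI * R0 * (y - x)) with (c * (2 * R0 * (y - x))) by (unfold c; ring).
      apply Rmult_le_compat_l; auto. simpl. nra. }
    assert (exp (- (c * x ^ 2)) * (1 - exp (- (c * (y ^ 2 - x ^ 2)))) <= 1 * (c * (y ^ 2 - x ^ 2)))
      by (apply Rmult_le_compat; lra).
    lra.
Qed.

Lemma RInt_lower (E : R -> R) lam p x y : 0 < lam -> 0 <= p -> 0 <= x <= y ->
  (forall t u, x <= t <= u -> u <= y -> E t <= E u) ->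
  ex_RInt (fun t => E t * f_dist lam p t) x y ->
  E x * (ee lam p x - ee lam p y) <= RInt (fun t => E t * f_dist lam p t) x y.
Proof.
  intros Hl Hp Hxy Hm Hex.
  rewrite <- RInt_fdist.
  replace (E x * RInt (f_dist lam p) x y) with (RInt (fun t => E x * f_dist lam p t) x y).
  2:{ apply (RInt_scal (V := R_CompleteNormedModule) (f_dist lam p) x y (E x)). apply ex_RInt_fdist. }
  apply RInt_le; try lra; auto.
  - apply (ex_RInt_scal (V := R_NormedModule) (f_dist lam p) x y (E x)). apply ex_RInt_fdist.
  - intros t Ht. apply Rmult_le_compat_r.
    + unfold f_dist. assert (0 < PI) by apply PI_RGT_0. assert (0 < exp (- lam * p * PI * t ^ 2)) by apply exp_pos.
      apply Rmult_le_pos; [|lra]. apply Rmult_le_pos; [|lra]. apply Rmult_le_pos; [|lra]. nra.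
    + apply Hm; lra.
Qed.

Lemma RInt_upper (E : R -> R) lam p x y : 0 < lam -> 0 <= p -> 0 <= x <= y ->
  (forall t, x < t < y -> E t <= E y) ->
  ex_RInt (fun t => E t * f_dist lam p t) x y ->
  RInt (fun t => E t * f_dist lam p t) x y <= E y * (ee lam p x - ee lam p y).
Proof.
  intros Hl Hp Hxy Hm Hex.
  rewrite <- RInt_fdist.
  replace (E y * RInt (f_dist lam p) x y) with (RInt (fun t => E y * f_dist lam p t) x y).
  2:{ apply (RInt_scal (V := R_CompleteNormedModule) (f_dist lam p) x y (E y)). apply ex_RInt_fdist. }
  apply RInt_le; try lra; auto.
  - apply (ex_RInt_scal (V := R_NormedModule) (f_dist lam p) x y (E y)). apply ex_RInt_fdist.
  - intros t Ht. apply Rmult_le_compat_r.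
    + unfold f_dist. assert (0 < PI) by apply PI_RGT_0. assert (0 < exp (- lam * p * PI * t ^ 2)) by apply exp_pos.
      apply Rmult_le_pos; [|lra]. apply Rmult_le_pos; [|lra]. apply Rmult_le_pos; [|lra]. nra.
    + apply Hm; lra.
Qed.

Lemma RInt_nonneg (E : R -> R) lam p x y : 0 < lam -> 0 <= p -> 0 <= x <= y ->
  (forall t, x < t < y -> 0 <= E t) ->
  ex_RInt (fun t => E t * f_dist lam p t) x y ->
  0 <= RInt (fun t => E t * f_dist lam p t) x y.
Proof.
  intros Hl Hp Hxy Hm Hex.
  replace 0 with (RInt (fun _ => 0) x y).
  2:{ rewrite (RInt_const (V := R_CompleteNormedModule)). unfold scal; simpl. unfold mult; simpl. ring. }
  apply RInt_le; try lra; auto.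
  - apply (ex_RInt_const (V := R_NormedModule)).
  - intros t Ht. apply Rmult_le_pos; [apply Hm; lra|].
    unfold f_dist. assert (0 < PI) by apply PI_RGT_0. assert (0 < exp (- lam * p * PI * t ^ 2)) by apply exp_pos.
    apply Rmult_le_pos; [|lra]. apply Rmult_le_pos; [|lra]. apply Rmult_le_pos; [|lra]. nra.
Qed.

Lemma sum_lin3 (al be ga : R) (a b c : nat -> R) n m :
  @eq R (sum_n_m (fun i => al * a i - be * b i - ga * c i) n m)
    (al * sum_n_m a n m - be * sum_n_m b n m - ga * sum_n_m c n m).
Proof.
  rewrite (sumR_minus (fun i => al * a i - be * b i) (fun i => ga * c i)).
  rewrite (sumR_minus (fun i => al * a i) (fun i => be * b i)).
  rewrite !sumR_scal. reflexivity.
Qed.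

Lemma sum_lin4 (a b c d : nat -> R) n m :
  @eq R (sum_n_m (fun i => a i - b i - c i + d i) n m)
    (sum_n_m a n m - sum_n_m b n m - sum_n_m c n m + sum_n_m d n m).
Proof.
  rewrite (sumR_plus (fun i => a i - b i - c i) d).
  rewrite (sumR_minus (fun i => a i - b i) c).
  rewrite (sumR_minus a b). reflexivity.
Qed.

Theorem proposition3 (Nf : nat) (beta lam F W sigma2 eta Pc Pmax alpha : R)
  (pc_star : R -> nat -> R) :
  (1 <= Nf)%nat -> 0 < beta -> 0 < lam ->
  0 < F -> 0 < W -> 0 < sigma2 -> 0 < eta -> 0 < Pc -> 0 < Pmax -> 0 < alpha ->
  (forall rc, 0 < rc -> optimal_pc beta lam Nf rc (pc_star rc)) ->
  forall r1 r2, 0 < r1 -> r1 < r2 ->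
    p_o beta lam Nf (pc_star r1) r1 <= p_o beta lam Nf (pc_star r2) r2 /\
    Ebar beta lam Nf F W sigma2 eta Pc Pmax alpha (pc_star r1) r1
      <= Ebar beta lam Nf F W sigma2 eta Pc Pmax alpha (pc_star r2) r2.
Proof.
  intros HN Hb Hl HF HW Hs He HPc HPm Ha Hopt r1 r2 Hr1 Hr12.
  assert (Op := Hopt r1 Hr1). assert (Oq := Hopt r2 ltac:(lra)).
  split; [apply part1; auto|].
  set (E := Ec_star F W sigma2 eta Pc Pmax alpha).
  set (p := pc_star r1) in *. set (q := pc_star r2) in *.
  set (w := p_r beta Nf).
  assert (HPI: 0 < PI) by apply PI_RGT_0.
  assert (Epos: forall x, 0 <= E x) by (intros x; apply (Ec_props F W sigma2 eta Pc Pmax alpha x); auto).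
  assert (Emon: forall x y, 0 < x -> x <= y -> E x <= E y)
    by (intros x y Hx Hxy; apply E_mono; auto).
  assert (pnn: forall i, (1 <= i <= Nf)%nat -> 0 <= p i) by (destruct Op as [[_ N] _]; auto).
  assert (qnn: forall i, (1 <= i <= Nf)%nat -> 0 <= q i) by (destruct Oq as [[_ N] _]; auto).
  assert (wpos: forall i, 0 < w i) by (intros; apply pr_pos; auto).
  assert (exI: forall pp a b, 0 <= pp -> 0 <= a <= b -> ex_RInt (fun t => E t * f_dist lam pp t) a b).
  { intros pp a b Hpp Hab. apply (ex_RInt_Chasles_2 (V := R_CompleteNormedModule) _ 0 a b); [lra|].
    refine (ex_RInt_Ef E (E 1) lam pp b Hpp Hl ltac:(lra) (Epos 1) _ _).
    - intros x Hx. apply E_cont; auto.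
    - intros x Hx. split; [apply Epos| apply Emon; lra]. }
  set (RI := fun pp a b => RInt (fun t => E t * f_dist lam pp t) a b).
  set (Q := fun x => sum_n_m (fun i => w i * RI (q i) x r2) 1 Nf - sum_n_m (fun i => w i * RI (p i) x r1) 1 Nf).
  set (H := fun x => sum_n_m (fun i => w i *
     ((ee lam (q i) x - ee lam (q i) r2) - (ee lam (p i) x - ee lam (p i) r1))) 1 Nf).
  set (Mi := fun i => 2 * lam * p i * PI * r1).
  set (M := sum_n_m (fun i => w i * Mi i) 1 Nf).
  assert (Chq: forall i x y, (1 <= i <= Nf)%nat -> 0 <= x <= y -> y <= r2 -> RI (q i) x r2 = RI (q i) x y + RI (q i) y r2).
  { intros i x y Hi Hx Hy. unfold RI. symmetry. apply (RInt_Chasles (V := R_CompleteNormedModule)); apply exI; auto; lra. }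
  assert (Chp: forall i x y, (1 <= i <= Nf)%nat -> 0 <= x <= y -> y <= r1 -> RI (p i) x r1 = RI (p i) x y + RI (p i) y r1).
  { intros i x y Hi Hx Hy. unfold RI. symmetry. apply (RInt_Chasles (V := R_CompleteNormedModule)); apply exI; auto; lra. }
  assert (Qd: forall x y, 0 <= x <= y -> y <= r1 ->
     Q x - Q y = sum_n_m (fun i => w i * (RI (q i) x y - RI (p i) x y)) 1 Nf).
  { intros x y Hxy Hy. unfold Q.
    transitivity (sum_n_m (fun i => w i * RI (q i) x r2 - w i * RI (p i) x r1
        - w i * RI (q i) y r2 + w i * RI (p i) y r1) 1 Nf).
    - rewrite sum_lin4. ring.
    - apply sum_n_m_ext_loc. intros i Hi. rewrite (Chq i x y), (Chp i x y); auto; try lra. }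
  assert (Q0 : 0 <= Q 0).
  { apply (abel Q E H M r1); auto.
    - unfold M. assert (sum_n_m (fun _ => 0) 1 Nf <= sum_n_m (fun i => w i * Mi i) 1 Nf).
      { apply sumR_le_loc. intros i Hi. apply Rmult_le_pos; [left; auto|]. unfold Mi.
        assert (0 <= p i) by auto. apply Rmult_le_pos; [|lra]. apply Rmult_le_pos; [|lra]. nra. }
      rewrite sum_n_m_const in H0. lra.
    - intros x y Hx Hy. apply Emon; lra.
    - intros x Hx. unfold H, w. apply (tail_dom beta lam Nf p q r1 r2 x); auto.
    -
      unfold Q, H.
      rewrite (sumR_zero_loc (fun i => w i * RI (p i) r1 r1)).
      2:{ intros i Hi. unfold RI. rewrite RInt_point. unfold zero; simpl. ring. }
      rewrite <- sumR_scal. rewrite Rminus_0_r.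
      apply sumR_le_loc. intros i Hi.
      replace (E r1 * (w i * ((ee lam (q i) r1 - ee lam (q i) r2) - (ee lam (p i) r1 - ee lam (p i) r1))))
        with (w i * (E r1 * (ee lam (q i) r1 - ee lam (q i) r2))) by ring.
      apply Rmult_le_compat_l; [left; auto|].
      apply RInt_lower; auto; try lra.
      + intros t u Ht Hu. apply Emon; lra.
      + apply exI; auto; lra.
    -
      intros x y Hxy Hy. rewrite Qd by lra.
      replace (E x * (H x - H y) - (E y - E x) * M * (y - x)) with
        (sum_n_m (fun i => E x * (w i * ((ee lam (q i) x - ee lam (q i) r2) - (ee lam (p i) x - ee lam (p i) r1)))
           - E x * (w i * ((ee lam (q i) y - ee lam (q i) r2) - (ee lam (p i) y - ee lam (p i) r1)))
           - ((E y - E x) * (y - x)) * (w i * Mi i)) 1 Nf).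
      2:{ rewrite (sum_lin3 (E x) (E x) ((E y - E x) * (y - x))
            (fun i => w i * ((ee lam (q i) x - ee lam (q i) r2) - (ee lam (p i) x - ee lam (p i) r1)))
            (fun i => w i * ((ee lam (q i) y - ee lam (q i) r2) - (ee lam (p i) y - ee lam (p i) r1)))
            (fun i => w i * Mi i)). fold (H x) (H y) M. Req. ring. }
      apply sumR_le_loc. intros i Hi.
      assert (Lq := RInt_lower E lam (q i) x y Hl (qnn i Hi) ltac:(lra)
         ltac:(intros t u Ht Hu; apply Emon; lra) (exI (q i) x y (qnn i Hi) ltac:(lra))).
      assert (Up := RInt_upper E lam (p i) x y Hl (pnn i Hi) ltac:(lra)
         ltac:(intros t Ht; apply Emon; lra) (exI (p i) x y (pnn i Hi) ltac:(lra))).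
      assert (Bd := ee_diff_bound lam (p i) x y r1 Hl (pnn i Hi) ltac:(lra) Hy).
      fold (Mi i) in Bd. unfold Mi in Bd |- *.
      assert (Exy: E x <= E y) by (apply Emon; lra).
      fold RI in Lq, Up.
      assert ((E y - E x) * (ee lam (p i) x - ee lam (p i) y) <= (E y - E x) * (2 * lam * p i * PI * r1 * (y - x)))
        by (apply Rmult_le_compat_l; lra).
      assert (wi := wpos i).
      replace (E x * (w i * (ee lam (q i) x - ee lam (q i) r2 - (ee lam (p i) x - ee lam (p i) r1))) -
        E x * (w i * (ee lam (q i) y - ee lam (q i) r2 - (ee lam (p i) y - ee lam (p i) r1))) -
        (E y - E x) * (y - x) * (w i * (2 * lam * p i * PI * r1)))
      with (w i * (E x * (ee lam (q i) x - ee lam (q i) y) -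
          (E x * (ee lam (p i) x - ee lam (p i) y) + (E y - E x) * (2 * lam * p i * PI * r1 * (y - x))))) by ring.
      apply Rmult_le_compat_l; [lra|]. unfold RI. lra.
    -
      intros y Hy. rewrite Qd by lra.
      replace (- (E y * M * y)) with (sum_n_m (fun i => - (E y * y) * (w i * Mi i)) 1 Nf).
      2:{ rewrite sumR_scal. fold M. Req. ring. }
      apply sumR_le_loc. intros i Hi.
      assert (Lq := RInt_nonneg E lam (q i) 0 y Hl (qnn i Hi) ltac:(lra)
         ltac:(intros t Ht; apply Epos) (exI (q i) 0 y (qnn i Hi) ltac:(lra))).
      assert (Up := RInt_upper E lam (p i) 0 y Hl (pnn i Hi) ltac:(lra)
         ltac:(intros t Ht; apply Emon; lra) (exI (p i) 0 y (pnn i Hi) ltac:(lra))).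
      assert (Bd := ee_diff_bound lam (p i) 0 y r1 Hl (pnn i Hi) ltac:(lra) ltac:(lra)).
      fold RI in Lq, Up. unfold Mi.
      assert (E y * (ee lam (p i) 0 - ee lam (p i) y) <= E y * (2 * lam * p i * PI * r1 * (y - 0)))
        by (apply Rmult_le_compat_l; [apply Epos| lra]).
      assert (wi := wpos i).
      replace (- (E y * y) * (w i * (2 * lam * p i * PI * r1)))
        with (w i * (- (E y * (2 * lam * p i * PI * r1 * (y - 0))))) by ring.
      apply Rmult_le_compat_l; [lra|]. unfold RI. lra. }
  unfold Q in Q0. unfold Ebar. fold E. fold w. unfold RI in Q0. lra.
Qed.
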